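(* Let $\sigma_1,\dots,\sigma_n$ be one-qubit pure states with Bloch vectors $s_1,\dots,s_n\in\mathbb{R}^3$ ($|s_i|=1$). For $a\in(0,1)$ put $\sigma_i(a)=\tfrac12 I+a(\sigma_i-\tfrac12 I)$ (the state with Bloch vector $a s_i$), and define $$A_i(a)=\{\rho\in\mathcal{S}^{\mathrm{faithful}} : D(\rho\|\sigma_i(a))\le D(\rho\|\sigma_j(a))\ \text{for all } j\},\qquad B_i(a)=\{\rho\in\mathcal{S}^{\mathrm{faithful}} : D(\sigma_i(a)\|\rho)\le D(\sigma_j(a)\|\rho)\ \text{for all } j\}.$$ Then for every $i$ the set limits $\lim_{a\to1}A_i(a)$ and $\lim_{a\to 1}B_i(a)$ exist, and the following six subsets of the set $\mathcal{S}^{\mathrm{pure}}$ of one-qubit pure states coincide: (1) $\{\rho\in\mathcal{S}^{\mathrm{pure}}: d_{\mathrm{FS}}(\rho,\sigma_i)\le d_{\mathrm{FS}}(\rho,\sigma_j)\ \forall j\}$; (2) $\{\rho\in\mathcal{S}^{\mathrm{pure}}: d_{\mathrm{B}}(\rho,\sigma_i)\le d_{\mathrm{B}}(\rho,\sigma_j)\ \forall j\}$; (3) the set of pure $\rho$ whose Bloch vector $x$ satisfies $\arccos(x\cdot s_i)\le \arccos(x\cdot s_j)$ for all $j$ (Voronoi region on the unit sphere for the geodesic distance); (4) the set of pure $\rho$ whose Bloch vector $x$ satisfies $|x-s_i|\le |x-s_j|$ for all $j$ (section of the 3-dimensional Euclidean Voronoi diagram with the sphere); (5) $\mathrm{Closure}(\lim_{a\to1}A_i(a))\cap\mathcal{S}^{\mathrm{pure}}$;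 (6) $\mathrm{Closure}(\lim_{a\to1}B_i(a))\cap\mathcal{S}^{\mathrm{pure}}$. That is, the Voronoi diagrams of these sites in the space of pure states with respect to the Fubini–Study distance, the Bures distance, the geodesic distance on the sphere, the Euclidean distance, and the two divergences all coincide.
   Context: A one-qubit state is a $2\times2$ density matrix (Hermitian, trace one, positive semidefinite), parameterized by its Bloch vector $(x,y,z)\in\mathbb{R}^3$, $x^2+y^2+z^2\le 1$, via $\rho=\begin{pmatrix}\frac{1+z}{2}&\frac{x-iy}{2}\\ \frac{x+iy}{2}&\frac{1-z}{2}\end{pmatrix}$. $\mathcal{S}$ is the set of all such states; $\rho$ is pure iff $\mathrm{rank}\,\rho=1$ (iff $|(x,y,z)|=1$), and faithful iff $\mathrm{rank}\,\rho=2$ (iff $|(x,y,z)|<1$); $\mathcal{S}^{\mathrm{pure}},\mathcal{S}^{\mathrm{faithful}}$ denote the corresponding subsets. The quantum divergence is $D(\sigma\|\rho)=\mathrm{Tr}\,\sigma(\log\sigma-\log\rho)$, defined when $\rho$ is faithful, with the convention $0\log0=0$; matrix functions are applied to eigenvalues. For pure $\rho,\sigma$ the Fubini–Study distance $d_{\mathrm{FS}}(\rho,\sigma)\in[0,\pi/2]$ is defined by $\cos d_{\mathrm{FS}}(\rho,\sigma)=\sqrt{\mathrm{Tr}(\rho\sigma)}$. The Bures distance is $d_{\mathrm{B}}(\rho,\sigma)=\sqrt{1-\mathrm{Tr}\sqrt{\sqrt{\sigma}\rho\sqrt{\sigma}}}$. $\mathrm{Closure}$ denotes topological closure in $\mathcal{S}$.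 *)

(* Defs.v *)
From HB Require Import structures.
From mathcomp Require Import all_boot all_order all_algebra.
From mathcomp Require Import all_classical all_reals all_analysis.
From mathcomp Require Import complex.
Set Implicit Arguments. Unset Strict Implicit. Unset Printing Implicit Defensive.
Import Order.TTheory GRing.Theory Num.Theory ComplexField.
Import numFieldNormedType.Exports.
Local Open Scope classical_set_scope.
Local Open Scope ring_scope.
Local Open Scope complex_scope.

Section Qubit.
Variable R : realType.

(* Bloch vectors (x,y,z) are row vectors of length 3, coordinates 0,1,2. *)
Definition dot3 (u v : 'rV[R]_3) : R := \sum_(k < 3) u 0 k * v 0 k.
Definition enorm3 (u : 'rV[R]_3) : R := Num.sqrt (dot3 u u).

Definition density (v : 'rV[R]_3) : 'M[R[i]]_2 :=
  let x := v 0 0 in let y := v 0 1 in let z := v 0 2%:R in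
  \matrix_(k < 2, l < 2)
    if (k == 0) && (l == 0) then ((1 + z) / 2)%:C
    else if (k == 0) && (l == 1) then Complex (x / 2) (- (y / 2))
    else if (k == 1) && (l == 0) then Complex (x / 2) (y / 2)
    else ((1 - z) / 2)%:C.

(* The one-qubit state space S, parameterized by Bloch vectors. *)
Definition is_state (v : 'rV[R]_3) : Prop := enorm3 v <= 1.
Definition pure_state (v : 'rV[R]_3) : Prop :=
  is_state v /\ \rank (density v) = 1%N.
Definition faithful_state (v : 'rV[R]_3) : Prop :=
  is_state v /\ \rank (density v) = 2%N.

(* Functional calculus of a 2x2 Hermitian matrix M: apply f to the
   eigenvalues t +- del in the spectral decomposition
   M = (t+del) P+ + (t-del) P-,  P+ = (M - (t-del)) / (2 del),
   P- = ((t+del) - M) / (2 del)  (or M = t I when del = 0). *)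
Definition mfun (f : R -> R) (M : 'M[R[i]]_2) : 'M[R[i]]_2 :=
  let a := complex.Re (M 0 0) in let d := complex.Re (M 1 1) in let b := M 0 1 in
  let t := (a + d) / 2 in
  let del := Num.sqrt (((a - d) / 2) ^+ 2 + (complex.Re b) ^+ 2 + (complex.Im b) ^+ 2) in
  if del == 0 then (f t)%:C%:M
  else ((f (t + del)) / (2 * del))%:C *: (M - (t - del)%:C%:M)
     + ((f (t - del)) / (2 * del))%:C *: ((t + del)%:C%:M - M).

Definition xlnx (x : R) : R := if x == 0 then 0 else x * ln x.

(* Quantum divergence D(sig || rho) = Tr sig (log sig - log rho),
   with Tr sig log sig computed as Tr (eta(sig)), eta(x) = x log x, 0 log 0 = 0. *)
Definition qdiv (sig rho : 'M[R[i]]_2) : R :=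
  complex.Re (\tr (mfun xlnx sig) - \tr (sig *m mfun (@ln R) rho)).

(* Fubini-Study distance (for pure states): cos d = sqrt (Tr rho sig), d in [0, pi/2]. *)
Definition dFS (rho sig : 'M[R[i]]_2) : R :=
  acos (Num.sqrt (complex.Re (\tr (rho *m sig)))).

Definition dB (rho sig : 'M[R[i]]_2) : R :=
  Num.sqrt (1 - complex.Re (\tr (mfun Num.sqrt
      (mfun Num.sqrt sig *m rho *m mfun Num.sqrt sig)))).

Definition setliminf1 (T : Type) (F : R -> set T) : set T :=
  [set x | \forall a \near (1:R)^'-, F a x].
Definition setlimsup1 (T : Type) (F : R -> set T) : set T :=
  [set x | ~ (\forall a \near (1:R)^'-, ~ F a x)].
Definition setlim1_exists (T : Type) (F : R -> set T) : Prop :=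
  setliminf1 F = setlimsup1 F.
Definition setlim1 (T : Type) (F : R -> set T) : set T := setliminf1 F.

Definition shrink (a : R) (sig : 'M[R[i]]_2) : 'M[R[i]]_2 :=
  (2^-1)%:C%:M + a%:C *: (sig - (2^-1)%:C%:M).

End Qubit.

(* Main.v *)
Require Import Defs.
From HB Require Import structures.
From mathcomp Require Import all_boot all_order all_algebra.
From mathcomp Require Import all_classical all_reals all_analysis.
From mathcomp Require Import complex.
From mathcomp Require Import ring lra.
Import Order.TTheory GRing.Theory Num.Theory ComplexField.
Import numFieldNormedType.Exports.
Local Open Scope classical_set_scope.
Local Open Scope ring_scope.

Section H.
Variable R : realType.
Local Open Scope complex_scope.

Lemma ReD (x y : R[i]) : complex.Re (x + y) = complex.Re x + complex.Re y. Proof. by case: x => a b; case: y => c d /=. Qed.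
Lemma ImD (x y : R[i]) : complex.Im (x + y) = complex.Im x + complex.Im y. Proof. by case: x => a b; case: y => c d /=. Qed.
Lemma ReN (x : R[i]) : complex.Re (- x) = - complex.Re x. Proof. by case: x => a b /=. Qed.
Lemma ImN (x : R[i]) : complex.Im (- x) = - complex.Im x. Proof. by case: x => a b /=. Qed.
Lemma ReB (x y : R[i]) : complex.Re (x - y) = complex.Re x - complex.Re y. Proof. by case: x => a b; case: y => c d /=. Qed.
Lemma ImB (x y : R[i]) : complex.Im (x - y) = complex.Im x - complex.Im y. Proof. by case: x => a b; case: y => c d /=. Qed.
Lemma ReM (x y : R[i]) : complex.Re (x * y) = complex.Re x * complex.Re y - complex.Im x * complex.Im y. Proof. by case: x => a b; case: y => c d /=. Qed.
Lemma ImM (x y : R[i]) : complex.Im (x * y) = complex.Re x * complex.Im y + complex.Im x * complex.Re y. Proof. by case: x => a b; case: y => c d /=; ring. Qed.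
Lemma Re0 : complex.Re (0 : R[i]) = 0. Proof. by []. Qed.
Lemma Im0 : complex.Im (0 : R[i]) = 0. Proof. by []. Qed.
Lemma Re1 : complex.Re (1 : R[i]) = 1. Proof. by []. Qed.
Lemma Im1 : complex.Im (1 : R[i]) = 0. Proof. by []. Qed.
Lemma ReC (x : R) : complex.Re (x%:C) = x. Proof. by []. Qed.
Lemma ImC (x : R) : complex.Im (x%:C) = 0. Proof. by []. Qed.
Lemma ReMn (x : R[i]) k : complex.Re (x *+ k) = complex.Re x *+ k.
Proof. elim: k => [|k IH]; by rewrite ?mulr0n // !mulrS ReD IH. Qed.
Lemma ImMn (x : R[i]) k : complex.Im (x *+ k) = complex.Im x *+ k.
Proof. elim: k => [|k IH]; by rewrite ?mulr0n // !mulrS ImD IH. Qed.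
Lemma ReZ (a : R) (x : R[i]) : complex.Re (a%:C * x) = a * complex.Re x. Proof. by case: x => b c /=; ring. Qed.

Lemma ceq (x y : R[i]) : complex.Re x = complex.Re y -> complex.Im x = complex.Im y -> x = y.
Proof. by case: x; case: y => /= a b c d -> ->. Qed.

Definition Hm (c x y z : R) : 'M[R[i]]_2 :=
  \matrix_(k < 2, l < 2)
    if (k == 0) && (l == 0) then (c + z)%:C
    else if (k == 0) && (l == 1) then Complex x (- y)
    else if (k == 1) && (l == 0) then Complex x y
    else (c - z)%:C.

Lemma ord2 (k : 'I_2) : k = 0 \/ k = 1.
Proof. case: k => [[|[|k]]] hk; [left|right|by []]; exact/val_inj. Qed.

Lemma mx2P (M N : 'M[R[i]]_2) : M 0 0 = N 0 0 -> M 0 1 = N 0 1 -> M 1 0 = N 1 0 -> M 1 1 = N 1 1 -> M = N.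
Proof.
move=> h1 h2 h3 h4; apply/matrixP => k l.
by case: (ord2 k) => ->; case: (ord2 l) => ->.
Qed.

Lemma lift01 : lift ord0 (ord0 : 'I_1) = 1 :> 'I_2. Proof. exact/val_inj. Qed.
Lemma ord0E : (ord0 : 'I_2) = 0. Proof. exact/val_inj. Qed.

Lemma trE (M : 'M[R[i]]_2) : \tr M = M 0 0 + M 1 1.
Proof. by rewrite /mxtrace !big_ord_recl big_ord0 addr0 lift01 ord0E. Qed.

Lemma mulE (M N : 'M[R[i]]_2) k l : (M *m N) k l = M k 0 * N 0 l + M k 1 * N 1 l.
Proof. by rewrite !mxE !big_ord_recl big_ord0 addr0 lift01 ord0E. Qed.

Lemma Hm00 c x y z : Hm c x y z 0 0 = (c + z)%:C. Proof. by rewrite mxE. Qed.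
Lemma Hm01 c x y z : Hm c x y z 0 1 = Complex x (- y). Proof. by rewrite mxE. Qed.
Lemma Hm10 c x y z : Hm c x y z 1 0 = Complex x y. Proof. by rewrite mxE. Qed.
Lemma Hm11 c x y z : Hm c x y z 1 1 = (c - z)%:C. Proof. by rewrite mxE. Qed.

Lemma ReCx (a b : R) : complex.Re (Complex a b) = a. Proof. by []. Qed.
Lemma ImCx (a b : R) : complex.Im (Complex a b) = b. Proof. by []. Qed.
Lemma ne01 : (0 == 1 :> 'I_2) = false. Proof. by []. Qed.
Lemma ne10 : (1 == 0 :> 'I_2) = false. Proof. by []. Qed.
Ltac cr := rewrite ?(ReD,ImD,ReB,ImB,ReN,ImN,ReM,ImM,ReC,ImC,Re0,Im0,Re1,Im1,ReCx,ImCx,ReMn,ImMn).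
Ltac cx := apply: ceq; cr.
Ltac mxs := rewrite ?(eqxx, ne01, ne10, mulr1n, mulr0n, andbT, andbF).


Lemma density_Hm (v : 'rV[R]_3) :
  density v = Hm (2^-1) (v 0 0 / 2) (v 0 1 / 2) (v 0 (2%:R) / 2).
Proof.
apply: mx2P; rewrite !mxE /=.
- by congr (_ %:C); field.
- by [].
- by [].
- by congr (_ %:C); field.
Qed.

Lemma shrink_Hm a c x y z :
  shrink a (Hm c x y z) = Hm (2^-1 + a * (c - 2^-1)) (a * x) (a * y) (a * z).
Proof.
apply: mx2P; rewrite /shrink !mxE; mxs; cx; ring.
Qed.

Lemma trHm c x y z : complex.Re (\tr (Hm c x y z)) = 2 * c.
Proof. rewrite trE Hm00 Hm11; cr; ring. Qed.

Lemma trHmM c x y z c' x' y' z' :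
  complex.Re (\tr (Hm c x y z *m Hm c' x' y' z')) = 2 * (c * c' + (x * x' + y * y' + z * z')).
Proof. rewrite trE !mulE !Hm00 !Hm11 !Hm01 !Hm10; cr; ring. Qed.


Definition dl (x y z : R) := Num.sqrt (x^+2 + y^+2 + z^+2).

Lemma mfun_Hm f c x y z :
  Defs.mfun f (Hm c x y z) =
   if dl x y z == 0 then Hm (f c) 0 0 0
   else Hm ((f (c + dl x y z) + f (c - dl x y z)) / 2)
      ((f (c + dl x y z) - f (c - dl x y z)) / (2 * dl x y z) * x)
      ((f (c + dl x y z) - f (c - dl x y z)) / (2 * dl x y z) * y)
      ((f (c + dl x y z) - f (c - dl x y z)) / (2 * dl x y z) * z).
Proof.
rewrite /Defs.mfun Hm00 Hm11 Hm01; cr.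
have -> : (c + z + (c - z)) / 2 = c by field.
have -> : ((c + z - (c - z)) / 2) ^+ 2 + x ^+ 2 + (- y) ^+ 2 = x^+2 + y^+2 + z^+2 by field.
rewrite -/(dl x y z).
case: ifP => hd.
- apply: mx2P; rewrite !mxE; mxs; cx; ring.
- have hd' : dl x y z != 0 by rewrite hd.
  apply: mx2P; rewrite !mxE; mxs; cx; field; exact: hd'.
Qed.


Lemma det2 (A : 'M[R[i]]_2) : \det A = A 0 0 * A 1 1 - A 0 1 * A 1 0.
Proof.
rewrite (expand_det_row _ 0) !big_ord_recl big_ord0 addr0 /cofactor !det_mx11 !mxE.
have l10 : lift 1 (0 : 'I_1) = 0 :> 'I_2 by exact/val_inj.
by rewrite lift01 ord0E l10 expr0 expr1 mul1r mulN1r mulrN.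
Qed.


Lemma C_eq0 (r : R) : (r%:C == 0 :> R[i]) = (r == 0).
Proof. apply/eqP/eqP => [h|->]; last by []. by have := congr1 (@complex.Re R) h. Qed.

Lemma rank_Hm c x y z : c != 0 ->
  \rank (Hm c x y z) = if c^+2 == x^+2+y^+2+z^+2 then 1%N else 2%N.
Proof.
move=> hc.
have hdet : \det (Hm c x y z) = (c^+2 - (x^+2+y^+2+z^+2))%:C.
  by rewrite det2 Hm00 Hm11 Hm01 Hm10; cx; ring.
case: ifP => he.
- have hn0 : Hm c x y z != 0.
    apply/eqP => h0; move/eqP: hc; apply.
    have := congr1 (fun M : 'M[R[i]]_2 => complex.Re (M 0 0 + M 1 1)) h0.
    rewrite Hm00 Hm11 !mxE; cr => h; lra.
  have hnu : ~~ (Hm c x y z \in unitmx).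
    by rewrite unitmxE unitfE hdet C_eq0 (eqP he) subrr eqxx.
  have h2 := rank_leq_row (Hm c x y z).
  rewrite -row_free_unit /row_free in hnu.
  rewrite -mxrank_eq0 in hn0.
  move: h2 hnu hn0; case: (\rank _) => [|[|[|r]]] //.
- apply: mxrank_unit.
  by rewrite unitmxE unitfE hdet C_eq0 subr_eq0 he.
Qed.


Lemma trHm_mfun f c' x' y' z' c x y z :
  complex.Re (\tr (Hm c' x' y' z' *m Defs.mfun f (Hm c x y z))) =
  if dl x y z == 0 then 2 * c' * f c
  else c' * (f (c + dl x y z) + f (c - dl x y z)) +
       (f (c + dl x y z) - f (c - dl x y z)) / dl x y z * (x' * x + y' * y + z' * z).
Proof.
rewrite mfun_Hm; case: ifP => h; rewrite trHmM; first by ring.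
have h' : dl x y z != 0 by rewrite h.
by field.
Qed.

Lemma tr_mfun f c x y z :
  complex.Re (\tr (Defs.mfun f (Hm c x y z))) =
  if dl x y z == 0 then 2 * f c else f (c + dl x y z) + f (c - dl x y z).
Proof.
rewrite mfun_Hm; case: ifP => h; rewrite trHm; first by ring.
by field.
Qed.

Lemma HmMM c x y z c' x' y' z' :
  Hm c x y z *m Hm c' x' y' z' *m Hm c x y z =
  Hm (c^+2*c' + 2*c*(x*x'+y*y'+z*z') + c'*(x^+2+y^+2+z^+2))
     ((2*c*c'+2*(x*x'+y*y'+z*z'))*x + (c^+2 - (x^+2+y^+2+z^+2))*x')
     ((2*c*c'+2*(x*x'+y*y'+z*z'))*y + (c^+2 - (x^+2+y^+2+z^+2))*y')
     ((2*c*c'+2*(x*x'+y*y'+z*z'))*z + (c^+2 - (x^+2+y^+2+z^+2))*z').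
Proof. apply: mx2P; rewrite !mulE !Hm00 !Hm11 !Hm01 !Hm10; cx; ring. Qed.

Lemma dot3E (u w : 'rV[R]_3) :
  dot3 u w = u 0 0 * w 0 0 + u 0 1 * w 0 1 + u 0 (2%:R) * w 0 (2%:R).
Proof.
rewrite /dot3 !big_ord_recl big_ord0 addr0 addrA.
have e1 : lift ord0 ord0 = 1 :> 'I_3 by exact/val_inj.
have e2 : lift ord0 (lift ord0 (ord0 : 'I_1)) = 2%:R :> 'I_3 by exact/val_inj.
have e0 : ord0 = 0 :> 'I_3 by exact/val_inj.
by rewrite e2 e1 e0.
Qed.


Lemma sum_half (u w : 'rV[R]_3) :
  u 0 0 / 2 * (w 0 0 / 2) + u 0 1 / 2 * (w 0 1 / 2) + u 0 (2%:R) / 2 * (w 0 (2%:R) / 2)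
  = dot3 u w / 4.
Proof. by rewrite dot3E; field. Qed.

Lemma sq_half (u : 'rV[R]_3) :
  (u 0 0 / 2)^+2 + (u 0 1 / 2)^+2 + (u 0 (2%:R) / 2)^+2 = dot3 u u / 4.
Proof. by rewrite dot3E; field. Qed.

Lemma dot_ge0 (u : 'rV[R]_3) : 0 <= dot3 u u.
Proof. rewrite dot3E -!expr2; apply: addr_ge0; [apply: addr_ge0|]; exact: sqr_ge0. Qed.

Lemma dl_half (v : 'rV[R]_3) :
  dl (v 0 0 / 2) (v 0 1 / 2) (v 0 (2%:R) / 2) = Num.sqrt (dot3 v v) / 2.
Proof.
rewrite /dl sq_half.
have h0 := dot_ge0 v.
have -> : dot3 v v / 4 = (Num.sqrt (dot3 v v) / 2)^+2.
  by rewrite expr_div_n sqr_sqrtr //; field.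
rewrite sqrtr_sqr ger0_norm //; apply: divr_ge0 => //; exact: sqrtr_ge0.
Qed.

Lemma rank_density (v : 'rV[R]_3) :
  \rank (density v) = if dot3 v v == 1 then 1%N else 2%N.
Proof.
rewrite density_Hm rank_Hm; last by rewrite invr_eq0 pnatr_eq0.
rewrite sq_half.
have -> : (2^-1 : R)^+2 = 1/4 by field.
congr (if _ then _ else _).
apply/eqP/eqP => h; lra.
Qed.

Lemma enorm_le1 (u : 'rV[R]_3) : (enorm3 u <= 1) = (dot3 u u <= 1).
Proof. by rewrite /enorm3 -{1}sqrtr1 ler_sqrt. Qed.

Lemma pureE (v : 'rV[R]_3) : pure_state v <-> dot3 v v = 1.
Proof.
rewrite /pure_state /is_state enorm_le1 rank_density; split.
- by case=> _; case: eqP.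
- by move=> h; rewrite h eqxx lexx.
Qed.

Lemma faithfulE (v : 'rV[R]_3) : faithful_state v <-> dot3 v v < 1.
Proof.
rewrite /faithful_state /is_state enorm_le1 rank_density lt_neqAle; split.
- by case=> h; case: eqP => // /eqP -> .
- by case/andP=> /negbTE -> ->.
Qed.


Lemma dot3C (u w : 'rV[R]_3) : dot3 u w = dot3 w u.
Proof. by rewrite !dot3E; ring. Qed.

Lemma dl_scale k x y z : 0 <= k -> dl (k * x) (k * y) (k * z) = k * dl x y z.
Proof.
move=> hk; rewrite /dl.
have -> : (k * x) ^+ 2 + (k * y) ^+ 2 + (k * z) ^+ 2 = k^+2 * (x ^+ 2 + y ^+ 2 + z ^+ 2) by ring.
by rewrite sqrtrM ?sqr_ge0 // sqrtr_sqr ger0_norm.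
Qed.

Lemma dFS_E (v s : 'rV[R]_3) :
  dFS (density v) (density s) = acos (Num.sqrt ((1 + dot3 v s) / 2)).
Proof.
by rewrite /dFS !density_Hm trHmM sum_half; congr (acos (Num.sqrt _)); field.
Qed.

Lemma mfun_sqrt_pure (s : 'rV[R]_3) : dot3 s s = 1 ->
  Defs.mfun Num.sqrt (Hm (2^-1) (s 0 0 / 2) (s 0 1 / 2) (s 0 (2%:R) / 2)) =
  Hm (2^-1) (s 0 0 / 2) (s 0 1 / 2) (s 0 (2%:R) / 2).
Proof.
move=> hs; rewrite mfun_Hm dl_half hs sqrtr1.
have -> : (1 / 2 == 0 :> R) = false by apply/negbTE; rewrite mul1r invr_eq0 pnatr_eq0.
have -> : (2^-1 + 1 / 2 : R) = 1 by field.
have -> : (2^-1 - 1 / 2 : R) = 0 by field.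
by rewrite sqrtr1 sqrtr0; congr Hm; field.
Qed.

Lemma dB_E (v s : 'rV[R]_3) : dot3 s s = 1 -> -1 <= dot3 v s ->
  dB (density v) (density s) = Num.sqrt (1 - Num.sqrt ((1 + dot3 v s) / 2)).
Proof.
move=> hs hvs; rewrite /dB !density_Hm mfun_sqrt_pure // HmMM sum_half sq_half hs dot3C.
set t := (1 + dot3 v s) / 2.
have ht : 0 <= t by rewrite /t; apply: divr_ge0; lra.
have -> : Hm ((2^-1)^+2 * 2^-1 + 2 * 2^-1 * (dot3 v s / 4) + 2^-1 * (1 / 4))
    ((2 * 2^-1 * 2^-1 + 2 * (dot3 v s / 4)) * (s 0 0 / 2) + ((2^-1)^+2 - 1 / 4) * (v 0 0 / 2))
    ((2 * 2^-1 * 2^-1 + 2 * (dot3 v s / 4)) * (s 0 1 / 2) + ((2^-1)^+2 - 1 / 4) * (v 0 1 / 2))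
    ((2 * 2^-1 * 2^-1 + 2 * (dot3 v s / 4)) * (s 0 (2%:R) / 2) + ((2^-1)^+2 - 1 / 4) * (v 0 (2%:R) / 2))
  = Hm (t / 2) (t * (s 0 0 / 2)) (t * (s 0 1 / 2)) (t * (s 0 (2%:R) / 2)).
  by congr Hm; rewrite /t; field.
rewrite tr_mfun dl_scale // dl_half hs sqrtr1.
congr (Num.sqrt (1 - _)).
case: ifP => h.
- have : t = 0 by move/eqP: h; lra.
  by move=> ->; rewrite mul0r sqrtr0 mulr0.
- have -> : t / 2 + t * (1 / 2) = t by field.
  have -> : t / 2 - t * (1 / 2) = 0 by field.
  by rewrite sqrtr0 addr0.
Qed.


Lemma sum_half_sc a (u w : 'rV[R]_3) :
  u 0 0 / 2 * (a * (w 0 0 / 2)) + u 0 1 / 2 * (a * (w 0 1 / 2)) + u 0 (2%:R) / 2 * (a * (w 0 (2%:R) / 2))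
  = a * dot3 u w / 4.
Proof. by rewrite dot3E; field. Qed.

Lemma qA (a : R) (v : 'rV[R]_3) : 0 < a < 1 -> exists K E, 0 < K /\
  forall s, dot3 s s = 1 -> qdiv (density v) (shrink a (density s)) = E - K * dot3 v s.
Proof.
case/andP=> ha0 ha1.
set cc := 2^-1 + a * (2^-1 - 2^-1).
exists ((ln (cc + a * (1 / 2)) - ln (cc - a * (1 / 2))) / 2).
exists (complex.Re (\tr (Defs.mfun (@xlnx R) (density v))) - 2^-1 * (ln (cc + a * (1 / 2)) + ln (cc - a * (1 / 2)))).
split.
- apply: divr_gt0 => //; rewrite subr_gt0 ltr_ln ?posrE /cc; lra.
- move=> s hs; rewrite /qdiv ReB !density_Hm shrink_Hm trHm_mfun.
  rewrite dl_scale ?dl_half ?hs ?sqrtr1; last lra.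
  have -> : (a * (1 / 2) == 0) = false by apply/negbTE; lra.
  rewrite -/cc sum_half_sc.
  field; lra.
Qed.


Lemma sum_half_sc2 a (u w : 'rV[R]_3) :
  a * (w 0 0 / 2) * (u 0 0 / 2) + a * (w 0 1 / 2) * (u 0 1 / 2) + a * (w 0 (2%:R) / 2) * (u 0 (2%:R) / 2)
  = a * dot3 u w / 4.
Proof. by rewrite dot3E; field. Qed.

Lemma qB (a : R) (v : 'rV[R]_3) : 0 < a < 1 -> dot3 v v < 1 -> exists K E, 0 <= K /\
  (K = 0 -> dot3 v v = 0) /\
  forall s, dot3 s s = 1 -> qdiv (shrink a (density s)) (density v) = E - K * dot3 v s.
Proof.
case/andP=> ha0 ha1 hv.
set cc := 2^-1 + a * (2^-1 - 2^-1).
set E1 := xlnx (cc + a * (1 / 2)) + xlnx (cc - a * (1 / 2)).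
have hE1 : forall s, dot3 s s = 1 ->
    complex.Re (\tr (Defs.mfun (@xlnx R) (shrink a (density s)))) = E1.
  move=> s hs; rewrite density_Hm shrink_Hm tr_mfun dl_scale ?dl_half ?hs ?sqrtr1; last lra.
  by have -> : (a * (1 / 2) == 0) = false by apply/negbTE; lra.
have hv0 := dot_ge0 v.
set dv := Num.sqrt (dot3 v v) / 2.
have hdv0 : 0 <= dv by rewrite /dv; apply: divr_ge0 => //; exact: sqrtr_ge0.
have hdv1 : dv < 2^-1.
  rewrite /dv; have : Num.sqrt (dot3 v v) < Num.sqrt 1 by rewrite ltr_sqrt.
  rewrite sqrtr1.
  lra.
case: (boolP (dv == 0)) => hd.
- exists 0, (E1 - 2 * cc * ln 2^-1); split; first by [].
  split.
    move=> _; move/eqP: hd; rewrite /dv => h.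
    have : Num.sqrt (dot3 v v) = 0 by lra.
    by move/eqP; rewrite sqrtr_eq0 => h'; apply/le_anti; rewrite h' hv0.
  move=> s hs; rewrite /qdiv ReB hE1 // !density_Hm shrink_Hm trHm_mfun dl_half -/dv hd -/cc; ring.
- exists ((ln (2^-1 + dv) - ln (2^-1 - dv)) / dv * a / 4).
  exists (E1 - cc * (ln (2^-1 + dv) + ln (2^-1 - dv))).
  split.
    apply: divr_ge0; last by [].
    apply: mulr_ge0; last lra.
    apply: divr_ge0; last lra.
    rewrite subr_ge0 ler_ln ?posrE; lra.
  split.
    move=> h; exfalso.
    have hdp : 0 < dv by rewrite lt_neqAle eq_sym hd hdv0.
    have : ln (2^-1 - dv) < ln (2^-1 + dv) by rewrite ltr_ln ?posrE; lra.
    move=> hL.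
    have : 0 < (ln (2^-1 + dv) - ln (2^-1 - dv)) / dv * a / 4.
      apply: divr_gt0; last by [].
      apply: mulr_gt0; last by [].
      apply: divr_gt0; last by [].
      lra.
    lra.
  move=> s hs; rewrite /qdiv ReB hE1 // !density_Hm shrink_Hm trHm_mfun dl_half -/dv (negbTE hd).
  rewrite -/cc sum_half_sc2 dot3C; field; exact: hd.
Qed.


Lemma dot_bound (u w : 'rV[R]_3) : dot3 u u = 1 -> dot3 w w = 1 -> -1 <= dot3 u w <= 1.
Proof.
rewrite !dot3E => h1 h2.
have := sqr_ge0 (u 0 0 - w 0 0); have := sqr_ge0 (u 0 1 - w 0 1);
have := sqr_ge0 (u 0 (2%:R) - w 0 (2%:R)).
have := sqr_ge0 (u 0 0 + w 0 0); have := sqr_ge0 (u 0 1 + w 0 1);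
have := sqr_ge0 (u 0 (2%:R) + w 0 (2%:R)).
move=> *; apply/andP; split; nra.
Qed.

Lemma dot_scale t (v u : 'rV[R]_3) : dot3 (t *: v) u = t * dot3 v u.
Proof. by rewrite !dot3E !mxE; ring. Qed.

Lemma dot_sub (v w : 'rV[R]_3) : dot3 (v - w) (v - w) = dot3 v v - 2 * dot3 v w + dot3 w w.
Proof. by rewrite !dot3E !mxE; ring. Qed.

Lemma dot_zero (v w : 'rV[R]_3) : dot3 v v = 0 -> dot3 v w = 0.
Proof.
rewrite !dot3E => h.
have h0 : v 0 0 = 0 by nra.
have h1 : v 0 1 = 0 by nra.
have h2 : v 0 (2%:R) = 0 by nra.
by rewrite h0 h1 h2; ring.
Qed.

Lemma unit_dot (u : 'rV[R]_3) : enorm3 u = 1 -> dot3 u u = 1.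
Proof. by move=> h; rewrite -(sqr_sqrtr (dot_ge0 u)) -/(enorm3 u) h expr1n. Qed.

Lemma comp_le1 (v : 'rV[R]_3) k : dot3 v v = 1 -> -1 <= v 0 k <= 1.
Proof.
move=> h.
have : v 0 k * v 0 k <= 1.
  rewrite -h /dot3 (bigD1 k) //= lerDl; apply: sumr_ge0 => j _.
  by rewrite -expr2 sqr_ge0.
move=> hk; apply/andP; split; nra.
Qed.

Lemma acos_le (u w : R) : -1 <= u <= 1 -> -1 <= w <= 1 -> (acos u <= acos w) = (w <= u).
Proof.
move=> hu hw.
have iu : acos u \in `[0, pi] by rewrite in_itv /= acos_ge0 // acos_lepi.
have iw : acos w \in `[0, pi] by rewrite in_itv /= acos_ge0 // acos_lepi.
rewrite !leNgt -(ltr_cos iw iu) !acosK //; rewrite in_itv /=; by [].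
Qed.

Lemma sqrt_in (t : R) : t <= 1 -> -1 <= Num.sqrt t <= 1.
Proof.
move=> ht; apply/andP; split.
- by apply: le_trans (sqrtr_ge0 t); rewrite lerN10.
- by rewrite -sqrtr1 ler_sqrt.
Qed.

Lemma cmpFS (di dj : R) : -1 <= di <= 1 -> -1 <= dj <= 1 ->
  (acos (Num.sqrt ((1 + di) / 2)) <= acos (Num.sqrt ((1 + dj) / 2))) = (dj <= di).
Proof.
move=> /andP[hi1 hi2] /andP[hj1 hj2].
rewrite acos_le ?sqrt_in; try lra.
rewrite ler_sqrt; last lra.
apply/idP/idP => h; lra.
Qed.

Lemma cmpB (di dj : R) : -1 <= di <= 1 -> -1 <= dj <= 1 ->
  (Num.sqrt (1 - Num.sqrt ((1 + di) / 2)) <= Num.sqrt (1 - Num.sqrt ((1 + dj) / 2))) = (dj <= di).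
Proof.
move=> /andP[hi1 hi2] /andP[hj1 hj2].
have /andP[_ h1] : -1 <= Num.sqrt ((1 + dj) / 2) <= 1 by apply: sqrt_in; lra.
rewrite ler_sqrt; last lra.
rewrite lerD2l lerN2 ler_sqrt; last lra.
apply/idP/idP => h; lra.
Qed.

Lemma ballE (v w : 'rV[R]_3) e : ball v e w -> forall k, `|v 0 k - w 0 k| < e.
Proof. move=> [_ h] k. have := h 0 k. rewrite -ball_normE /=. by []. Qed.
Lemma ballI (v w : 'rV[R]_3) e : 0 < e -> (forall k, `|v 0 k - w 0 k| < e) -> ball v e w.
Proof. move=> he h; split => // i j. rewrite (ord1 i) -ball_normE /=. exact: h. Qed.
Lemma near01 : \forall a \near (1:R)^'-, 0 < a < 1.
Proof. near=> a. apply/andP; split. near: a. apply: nbhs_left_gt. lra. near: a. exact: nbhs_left_lt. Unshelve. all: end_near. Qed.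

Lemma prod_bound (a b e : R) : `|a| < e -> -2 <= b <= 2 -> a * b <= 2 * e.
Proof. rewrite ltr_norml => /andP[h1 h2] /andP[h3 h4]; nra. Qed.

Lemma near_ex {P : R -> Prop} : (\forall a \near (1:R)^'-, P a) -> exists a, P a /\ 0 < a < 1.
Proof.
move=> h; have hn := near01.
have hh : \forall a \near (1:R)^'-, P a /\ 0 < a < 1.
  near=> a; split.
  - near: a; exact: h.
  - near: a; exact: hn.
have := @filter_ex _ _ _ _ hh.
move=> /(_ (at_left_proper_filter _)) [a ha]; by exists a.
Unshelve. all: end_near.
Qed.

Lemma setlim_const (T : Type) (F : R -> set T) (C : set T) :
  (forall a, 0 < a < 1 -> F a = C) -> setliminf1 F = C /\ setlimsup1 F = C.
Proof.
move=> hF; have hn := near01.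
split; apply/funext => x; apply/propext; rewrite /setliminf1 /setlimsup1 /=; split.
- move=> h; have [a [ha1 ha2]] := near_ex h.
  by rewrite -(hF a ha2).
- move=> Cx; near=> a; rewrite hF //; near: a; exact: hn.
- move=> h; case: (pselect (C x)) => // nC; exfalso; apply: h.
  near=> a; rewrite hF //; near: a; exact: hn.
- move=> Cx h; have [a [ha1 ha2]] := near_ex h.
  by apply: ha1; rewrite (hF a ha2).
Unshelve. all: end_near.
Qed.

Lemma closureCs n (s : 'I_n -> 'rV[R]_3) (i : 'I_n) : (forall j, dot3 (s j) (s j) = 1) ->
  closure [set v | dot3 v v < 1 /\ forall j, dot3 v (s j) <= dot3 v (s i)] `&` [set v | pure_state v]
  = [set v | pure_state v /\ forall j, dot3 v (s j) <= dot3 v (s i)].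
Proof.
move=> hsd; apply/funext => v; apply/propext; split.
- case=> hcl hp; split => // j.
  rewrite leNgt; apply/negP => hlt.
  set del := dot3 v (s j) - dot3 v (s i).
  have hdel : 0 < del by rewrite /del subr_gt0.
  have hb : nbhs v (ball v (del / 12)).
    by apply/nbhs_ballP; exists (del / 12) => //; apply: divr_gt0.
  have [w [[hw1 hw2] hwb]] := hcl _ hb.
  have hk := ballE _ _ _ hwb.
  have hw := hw2 j.
  have hbd : forall k, -2 <= s j 0 k - s i 0 k <= 2.
    move=> k; have /andP[a1 a2] := comp_le1 _ k (hsd j).
    have /andP[b1 b2] := comp_le1 _ k (hsd i); apply/andP; split; lra.
  have p0 := prod_bound _ _ _ (hk 0) (hbd 0).
  have p1 := prod_bound _ _ _ (hk 1) (hbd 1).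
  have p2 := prod_bound _ _ _ (hk (2%:R)) (hbd (2%:R)).
  move: hw; rewrite /del !dot3E in p0 p1 p2 hdel *.
  move=> hw; nra.
- case=> hp h; split => //.
  have hv := (pureE v).1 hp.
  move=> B /nbhs_ballP [e he hB].
  have [m [hm1 hm2 hm3]] : exists m, [/\ 0 < m, m <= e & m <= 1].
    by case: (leP e 1) => he1; [exists e | exists 1]; split => //; lra.
  set t := 1 - m / 2.
  exists (t *: v); split; last first.
    apply: hB; apply: ballI => // k; rewrite !mxE.
    have /andP[c1 c2] := comp_le1 _ k hv.
    rewrite ltr_norml; apply/andP; split; rewrite /t; nra.
  split.
    rewrite dot_scale dot3C dot_scale hv /t; nra.
  move=> j; rewrite !dot_scale ler_pM2l ?h //; rewrite /t; lra.
Qed.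


Lemma FS_cmp (v a b : 'rV[R]_3) : dot3 a a = 1 -> dot3 b b = 1 -> dot3 v v = 1 ->
  (dFS (density v) (density a) <= dFS (density v) (density b)) = (dot3 v b <= dot3 v a).
Proof.
move=> ha hb hv; rewrite !dFS_E cmpFS //; exact: dot_bound.
Qed.

Lemma B_cmp (v a b : 'rV[R]_3) : dot3 a a = 1 -> dot3 b b = 1 -> dot3 v v = 1 ->
  (dB (density v) (density a) <= dB (density v) (density b)) = (dot3 v b <= dot3 v a).
Proof.
move=> ha hb hv.
have /andP[a1 a2] := dot_bound v a hv ha.
have /andP[b1 b2] := dot_bound v b hv hb.
rewrite (dB_E v a ha a1) (dB_E v b hb b1) cmpB //; apply/andP; split => //.
Qed.

Lemma acos_cmp (v a b : 'rV[R]_3) : dot3 a a = 1 -> dot3 b b = 1 -> dot3 v v = 1 ->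
  (acos (dot3 v a) <= acos (dot3 v b)) = (dot3 v b <= dot3 v a).
Proof. move=> ha hb hv; rewrite acos_le //; exact: dot_bound. Qed.

Lemma eucl_cmp (v a b : 'rV[R]_3) : dot3 a a = 1 -> dot3 b b = 1 -> dot3 v v = 1 ->
  (enorm3 (v - a) <= enorm3 (v - b)) = (dot3 v b <= dot3 v a).
Proof.
move=> ha hb hv; rewrite /enorm3 ler_sqrt ?dot_ge0 // !dot_sub ha hb hv.
apply/idP/idP => h; lra.
Qed.

End H.
Arguments ReD {R}.
Arguments ImD {R}.
Arguments ReN {R}.
Arguments ImN {R}.
Arguments ReB {R}.
Arguments ImB {R}.
Arguments ReM {R}.
Arguments ImM {R}.
Arguments Re0 {R}.
Arguments Im0 {R}.
Arguments Re1 {R}.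
Arguments Im1 {R}.
Arguments ReC {R}.
Arguments ImC {R}.
Arguments ReMn {R}.
Arguments ImMn {R}.
Arguments ReZ {R}.
Arguments ceq {R}.
Arguments mx2P {R}.
Arguments trE {R}.
Arguments mulE {R}.
Arguments Hm00 {R}.
Arguments Hm01 {R}.
Arguments Hm10 {R}.
Arguments Hm11 {R}.
Arguments ReCx {R}.
Arguments ImCx {R}.
Arguments density_Hm {R}.
Arguments shrink_Hm {R}.
Arguments trHm {R}.
Arguments trHmM {R}.
Arguments mfun_Hm {R}.
Arguments det2 {R}.
Arguments C_eq0 {R}.
Arguments rank_Hm {R}.
Arguments trHm_mfun {R}.
Arguments tr_mfun {R}.
Arguments HmMM {R}.
Arguments dot3E {R}.
Arguments sum_half {R}.
Arguments sq_half {R}.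
Arguments dot_ge0 {R}.
Arguments dl_half {R}.
Arguments rank_density {R}.
Arguments enorm_le1 {R}.
Arguments pureE {R}.
Arguments faithfulE {R}.
Arguments dot3C {R}.
Arguments dl_scale {R}.
Arguments dFS_E {R}.
Arguments FS_cmp {R}.
Arguments B_cmp {R}.
Arguments acos_cmp {R}.
Arguments eucl_cmp {R}.
Arguments mfun_sqrt_pure {R}.
Arguments dB_E {R}.
Arguments sum_half_sc {R}.
Arguments qA {R}.
Arguments sum_half_sc2 {R}.
Arguments qB {R}.
Arguments dot_bound {R}.
Arguments dot_scale {R}.
Arguments dot_sub {R}.
Arguments dot_zero {R}.
Arguments unit_dot {R}.
Arguments comp_le1 {R}.
Arguments acos_le {R}.
Arguments sqrt_in {R}.
Arguments cmpFS {R}.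
Arguments cmpB {R}.
Arguments ballE {R}.
Arguments ballI {R}.
Arguments near01 {R}.
Arguments prod_bound {R}.
Arguments setlim_const {R}.
Arguments closureCs {R}.

Theorem mainTheorem1 (R : realType) (n : nat) (s : 'I_n -> 'rV[R]_3)
  (hs : forall i, enorm3 (s i) = 1) :
  let A := fun (i : 'I_n) (a : R) =>
    [set v | faithful_state v /\ forall j : 'I_n,
       qdiv (density v) (shrink a (density (s i)))
         <= qdiv (density v) (shrink a (density (s j)))] in
  let B := fun (i : 'I_n) (a : R) =>
    [set v | faithful_state v /\ forall j : 'I_n,
       qdiv (shrink a (density (s i))) (density v)
         <= qdiv (shrink a (density (s j))) (density v)] in
  forall i : 'I_n,
    setlim1_exists (A i) /\ setlim1_exists (B i) /\
    let V1 := [set v | pure_state v /\ forall j : 'I_n,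
                 dFS (density v) (density (s i)) <= dFS (density v) (density (s j))] in
    let V2 := [set v | pure_state v /\ forall j : 'I_n,
                 dB (density v) (density (s i)) <= dB (density v) (density (s j))] in
    let V3 := [set v | pure_state v /\ forall j : 'I_n,
                 acos (dot3 v (s i)) <= acos (dot3 v (s j))] in
    let V4 := [set v | pure_state v /\ forall j : 'I_n,
                 enorm3 (v - s i) <= enorm3 (v - s j)] in
    let V5 := closure (setlim1 (A i)) `&` [set v | pure_state v] in
    let V6 := closure (setlim1 (B i)) `&` [set v | pure_state v] in
    [/\ V1 = V2, V2 = V3, V3 = V4, V4 = V5 & V5 = V6].
Proof.
move=> A B i.
have hsd : forall j, dot3 (s j) (s j) = 1 by move=> j; exact: unit_dot.
set Cs := [set v : 'rV[R]_3 | dot3 v v < 1 /\ forall j, dot3 v (s j) <= dot3 v (s i)].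
set Ps := [set v : 'rV[R]_3 | pure_state v /\ forall j, dot3 v (s j) <= dot3 v (s i)].
have hA : forall a, 0 < a < 1 -> A i a = Cs.
  move=> a ha; apply/funext => v; apply/propext; rewrite /A /Cs /=.
  have [K [E [hK hq]]] := qA a v ha.
  have e : forall j, (qdiv (density v) (shrink a (density (s i))) <=
      qdiv (density v) (shrink a (density (s j)))) = (dot3 v (s j) <= dot3 v (s i)).
    by move=> j; rewrite !hq // lerD2l lerN2 ler_pM2l.
  split=> [[hf h]|[hf h]]; split.
  - exact: (faithfulE v).1 hf.
  - by move=> j; rewrite -e.
  - exact: (faithfulE v).2 hf.
  - by move=> j; rewrite e.
have hB : forall a, 0 < a < 1 -> B i a = Cs.
  move=> a ha; apply/funext => v; apply/propext; rewrite /B /Cs /=.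
  have e : dot3 v v < 1 -> forall j, (qdiv (shrink a (density (s i))) (density v) <=
      qdiv (shrink a (density (s j))) (density v)) = (dot3 v (s j) <= dot3 v (s i)).
    move=> hv j; have [K [E [hK [hK0 hq]]]] := qB a v ha hv.
    rewrite !hq //; case: (eqVneq K 0) => [hK0'|hKn].
    - have hz := hK0 hK0'.
      by rewrite hK0' !mul0r !(dot_zero _ _ hz) !lexx.
    - by rewrite lerD2l lerN2 ler_pM2l // lt_neqAle eq_sym hKn hK.
  split=> [[hf h]|[hf h]].
  - have hv := (faithfulE v).1 hf; split => // j; by rewrite -(e hv).
  - split; first exact: (faithfulE v).2 hf.
    by move=> j; rewrite (e hf).
have [hAi hAs] := setlim_const _ _ _ hA.
have [hBi hBs] := setlim_const _ _ _ hB.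
split; first by rewrite /setlim1_exists hAi hAs.
split; first by rewrite /setlim1_exists hBi hBs.
move=> V1 V2 V3 V4 V5 V6.
have e1 : V1 = Ps.
  apply/funext => v; apply/propext; rewrite /V1 /Ps /=.
  split=> [[hp h]|[hp h]]; (split; first exact: hp); move=> j; have hv := (pureE v).1 hp.
  - by rewrite -(FS_cmp _ _ _ (hsd i) (hsd j) hv).
  - by rewrite (FS_cmp _ _ _ (hsd i) (hsd j) hv).
have e2 : V2 = Ps.
  apply/funext => v; apply/propext; rewrite /V2 /Ps /=.
  split=> [[hp h]|[hp h]]; (split; first exact: hp); move=> j; have hv := (pureE v).1 hp.
  - by rewrite -(B_cmp _ _ _ (hsd i) (hsd j) hv).
  - by rewrite (B_cmp _ _ _ (hsd i) (hsd j) hv).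
have e3 : V3 = Ps.
  apply/funext => v; apply/propext; rewrite /V3 /Ps /=.
  split=> [[hp h]|[hp h]]; (split; first exact: hp); move=> j; have hv := (pureE v).1 hp.
  - by rewrite -(acos_cmp _ _ _ (hsd i) (hsd j) hv).
  - by rewrite (acos_cmp _ _ _ (hsd i) (hsd j) hv).
have e4 : V4 = Ps.
  apply/funext => v; apply/propext; rewrite /V4 /Ps /=.
  split=> [[hp h]|[hp h]]; (split; first exact: hp); move=> j; have hv := (pureE v).1 hp.
  - by rewrite -(eucl_cmp _ _ _ (hsd i) (hsd j) hv).
  - by rewrite (eucl_cmp _ _ _ (hsd i) (hsd j) hv).
have e5 : V5 = Ps by rewrite /V5 /setlim1 hAi (closureCs _ _ _ hsd).
have e6 : V6 = Ps by rewrite /V6 /setlim1 hBi (closureCs _ _ _ hsd).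
by rewrite e1 e2 e3 e4 e5 e6.
Qed.
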